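(* Let $f(x)\in\mathbb{F}_{q^n}[x]$ be a scattered polynomial, with $q>3$ and $n>2$. Let $\kappa$ be an affine central collineation of the translation plane $\mathcal{A}_f$, and let $\lambda$ be the semilinear automorphism related to $\kappa$, written as $\lambda(x,y)=(x^{p^k},y^{p^k})A$ with $A$ nonsingular and $0\le k<ne$ ($q=p^e$). Then the field automorphism $x\mapsto x^{p^k}$ associated with $\lambda$ is the identity of $\mathbb{F}_{q^n}$. Consequently $\lambda\in H_f$.
   Context: $q=p^e$ is a prime power, $p$ prime. A $q$-polynomial $f(x)=\sum_{i=0}^{n-1}a_ix^{q^i}\in\mathbb{F}_{q^n}[x]$ is scattered if for all $y,z\in\mathbb{F}_{q^n}$, $zf(y)-yf(z)=0$ implies $y,z$ are $\mathbb{F}_q$-linearly dependent. $U_f=\{(x,f(x))\colon x\in\mathbb{F}_{q^n}\}$, $L_f=\{\langle(x,f(x))\rangle_{\mathbb{F}_{q^n}}\colon x\ne0\}$, $\mathcal{D}=\{\langle v\rangle_{\mathbb{F}_{q^n}}\colon v\in\mathbb{F}_{q^n}^2\setminus\{0\}\}$ (the Desarguesian spread). Then $\mathcal{B}_f=(\mathcal{D}\setminus L_f)\cup\{hU_f\colon h\in\mathbb{F}_{q^n}^*\}$ is a spread of the $2n$-dimensional $\mathbb{F}_q$-space $\mathbb{F}_{q^n}^2$, and $\mathcal{A}_f$ is the affine translation plane whose points are the vectors of $\mathbb{F}_{q^n}^2$ and whose lines are the cosets $v+W$, $W\in\mathcal{B}_f$ (the elements of $\mathcal{B}_f$ are its components,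 viewed also as points at infinity). A central collineation of a projective plane is a nonidentity collineation fixing some line pointwise (axis); an affine central collineation of $\mathcal{A}_f$ is a collineation whose extension to the projective closure is a central collineation with axis a proper (affine) line. Every collineation $\kappa$ of $\mathcal{A}_f$ satisfies $\kappa(v)=\lambda(v)+u$ with $u=\kappa(0)$ and $\lambda$ an additive automorphism of $\mathbb{F}_{q^n}^2$ (the semilinear automorphism related to $\kappa$); for $q>3$ it is known that $\lambda$ is $\mathbb{F}_{q^n}$-semilinear, i.e. $\lambda(x,y)=(x^{p^k},y^{p^k})A$ with $A\in\mathbb{F}_{q^n}^{2\times2}$ nonsingular. Matrices act by $(x,y)\mapsto(x,y)A$; $G_f=\{A\in\mathrm{GL}(2,q^n)\colon U_fA=U_f\}$ and $H_f=\{dA\colon d\in\mathbb{F}_{q^n}^*,A\in G_f\}$. *)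

(* Defs.v *)
From HB Require Import structures.
From mathcomp Require Import all_boot all_order all_algebra all_field.
Set Implicit Arguments. Unset Strict Implicit. Unset Printing Implicit Defensive.
Import Order.TTheory GRing.Theory.
Local Open Scope ring_scope.

(* Throughout: L is the finite field F_{q^n}, q = p^e, and a q-polynomial
   f(x) = \sum_{i<n} a_i x^{q^i} is given by its coefficient vector a.
   Vectors of F_{q^n}^2 are row vectors 'rV[L]_2; matrices act on the right. *)

Section Defs.
Variable L : finFieldType.
Variables (q n : nat) (a : 'I_n -> L).

Definition inFq (c : L) : Prop := c ^+ q = c.

Definition qpoly (x : L) : L := \sum_(i < n) a i * x ^+ (q ^ i).

Definition vec2 (x y : L) : 'rV[L]_2 := \row_(j < 2) (if j == 0 then x else y).

Definition Fq_dep (y z : L) : Prop :=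
  exists c d : L, inFq c /\ inFq d /\ (c != 0 \/ d != 0) /\ c * y + d * z = 0.

Definition scattered : Prop :=
  forall y z : L, z * qpoly y - y * qpoly z = 0 -> Fq_dep y z.

Definition Uf : {set 'rV[L]_2} := [set vec2 x (qpoly x) | x : L].

Definition span1 (v : 'rV[L]_2) : {set 'rV[L]_2} := [set c *: v | c : L].

Definition in_Lf (W : {set 'rV[L]_2}) : Prop :=
  exists2 x : L, x != 0 & W = span1 (vec2 x (qpoly x)).

Definition in_D (W : {set 'rV[L]_2}) : Prop :=
  exists2 v : 'rV[L]_2, v != 0 & W = span1 v.

Definition component (W : {set 'rV[L]_2}) : Prop :=
  (in_D W /\ ~ in_Lf W) \/ exists2 h : L, h != 0 & W = [set h *: u | u in Uf].

Definition translate (u : 'rV[L]_2) (W : {set 'rV[L]_2}) : {set 'rV[L]_2} :=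
  [set u + w | w in W].

Definition is_line (S : {set 'rV[L]_2}) : Prop :=
  exists u W, component W /\ S = translate u W.

Definition collineation (kappa : 'rV[L]_2 -> 'rV[L]_2) : Prop :=
  bijective kappa /\ forall S : {set 'rV[L]_2}, is_line (kappa @: S) <-> is_line S.

(* affine central collineation: a nonidentity collineation whose projective
   extension fixes pointwise some affine line u + W, i.e. it fixes every affine
   point of u + W and also the point at infinity W (kappa maps lines with
   direction W to lines with direction W). *)
Definition affine_central_collineation (kappa : 'rV[L]_2 -> 'rV[L]_2) : Prop :=
  [/\ collineation kappa,
      (exists v, kappa v != v) &
      (exists u W, [/\ component W,
                      forall v, v \in translate u W -> kappa v = v &
                      exists u', kappa @: W = translate u' W])].

Definition in_Gf (B : 'M[L]_2) : Prop :=
  B \in unitmx /\ [set u *m B | u in Uf] = Uf.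

Definition in_Hf (A : 'M[L]_2) : Prop :=
  exists d : L, exists B : 'M[L]_2, [/\ d != 0, in_Gf B & A = d *: B].

End Defs.

(* Main.v *)
Require Import Defs.
From HB Require Import structures.
From mathcomp Require Import all_boot all_order all_algebra all_field.
From mathcomp Require Import ring zify.
Import GRing.Theory.
Local Open Scope ring_scope.

Section V.
Variable L : finFieldType.
Lemma vec2_00 (x y : L) : vec2 x y 0 0 = x. Proof. by rewrite mxE. Qed.
Lemma vec2_01 (x y : L) : vec2 x y 0 1 = y. Proof. by rewrite mxE. Qed.
Lemma vec2E (v : 'rV[L]_2) : vec2 (v 0 0) (v 0 1) = v.
Proof.
apply/rowP => j; rewrite mxE; case: j => [[|[|//]]] hj /=.
  by congr (v 0 _); apply: val_inj.
by congr (v 0 _); apply: val_inj.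
Qed.
Lemma vec2D (x y x' y' : L) : vec2 x y + vec2 x' y' = vec2 (x + x') (y + y').
Proof. by apply/rowP => j; rewrite !mxE; case: ifP. Qed.
Lemma vec2N (x y : L) : - vec2 x y = vec2 (- x) (- y).
Proof. by apply/rowP => j; rewrite !mxE; case: ifP. Qed.
Lemma vec2Z (c x y : L) : c *: vec2 x y = vec2 (c * x) (c * y).
Proof. by apply/rowP => j; rewrite !mxE; case: ifP. Qed.
Lemma vec2_inj (x y x' y' : L) : vec2 x y = vec2 x' y' -> x = x' /\ y = y'.
Proof. by move=> E; split; [rewrite -(vec2_00 x y) E vec2_00 | rewrite -(vec2_01 x y) E vec2_01]. Qed.
Lemma vec2_eq0 (x y : L) : (vec2 x y == 0) = (x == 0) && (y == 0).
Proof.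
apply/eqP/andP => [E|[/eqP -> /eqP ->]].
  have z0 : vec2 x y = vec2 (0:L) 0.
    by rewrite E; apply/rowP => j; rewrite !mxE; case: ifP.
  by case: (vec2_inj _ _ _ _ z0) => -> ->.
by apply/rowP => j; rewrite !mxE; case: ifP.
Qed.
Lemma mul_vec2 (x y : L) (A : 'M[L]_2) :
  vec2 x y *m A = vec2 (x * A 0 0 + y * A 1 0) (x * A 0 1 + y * A 1 1).
Proof.
apply/rowP => j; rewrite !mxE !big_ord_recr big_ord0 /= add0r !mxE /=.
by case: j => [[|[|//]]] hj /=; congr (_ * _ + _ * _); congr (A _ _); apply: val_inj.
Qed.
End V.

Section S.
Variable L : finFieldType.
Variables (p e n : nat) (a : 'I_n -> L).
Hypotheses (hp : prime p) (he : (0 < e)%N) (hcard : #|L| = ((p ^ e) ^ n)%N)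
  (hq : (3 < p ^ e)%N) (hn : (2 < n)%N) (hscat : scattered (p ^ e) a).

Lemma pL : p \in [pchar L].
Proof. by apply: (@card_finPcharP _ p (e * n)) => //; rewrite expnM. Qed.

Lemma pnatP m : [pchar L].-nat (p ^ m)%N.
Proof.
rewrite pnatX (eq_pnat _ (pcharf_eq pL)) (pnat_id hp). by case: m.
Qed.

Lemma sD m (x y : L) : (x + y) ^+ (p ^ m) = x ^+ (p ^ m) + y ^+ (p ^ m).
Proof. exact: exprDn_pchar (pnatP m). Qed.
Lemma sN m (x : L) : (- x) ^+ (p ^ m) = - x ^+ (p ^ m).
Proof. exact: exprNn_pchar (pnatP m). Qed.
Lemma sB m (x y : L) : (x - y) ^+ (p ^ m) = x ^+ (p ^ m) - y ^+ (p ^ m).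
Proof. by rewrite sD sN. Qed.

Local Notation q := (p ^ e)%N.
Local Notation ff := (Defs.qpoly (p ^ e)%N a).

Lemma qpolyD (x y : L) : ff (x + y) = ff x + ff y.
Proof.
rewrite /Defs.qpoly -big_split /=; apply: eq_bigr => i _.
by rewrite -expnM sD mulrDr.
Qed.
Lemma qpolyN (x : L) : ff (- x) = - ff x.
Proof.
rewrite /Defs.qpoly -sumrN; apply: eq_bigr => i _.
by rewrite -expnM sN mulrN.
Qed.
Lemma qpolyB (x y : L) : ff (x - y) = ff x - ff y.
Proof. by rewrite qpolyD qpolyN. Qed.

Definition FqS : {set L} := [set c : L | c ^+ q == c].

Lemma card_Fq : (#|FqS| <= q)%N.
Proof.
have q1 : (1 < q)%N by lia.
have P0 : ('X^q - 'X : {poly L}) != 0.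
  by rewrite -size_poly_eq0 size_addl ?size_polyXn // size_opp size_polyX; lia.
have := max_poly_roots P0 (rs := enum FqS).
rewrite enum_uniq cardE size_addl ?size_polyXn ?size_opp ?size_polyX; last lia.
move=> H; have: (size (enum FqS) < q.+1)%N; last by [].
apply: H => //; apply/allP => x; rewrite mem_enum inE => /eqP hx.
by rewrite /root !hornerE hx subrr.
Qed.


Lemma inFqS (c : L) : inFq q c -> c \in FqS.
Proof. by rewrite /inFq inE => ->. Qed.

Lemma kerFq (t : L) : ff t = t * ff 1 -> t \in FqS.
Proof.
move=> ht.
have [c [d [hc [hd [hcd hE]]]]] : Fq_dep q t 1.
  by apply: hscat; rewrite mul1r ht subrr.
have c0 : c != 0.
  apply/negP => /eqP c0; move: hcd hE; rewrite c0 mul0r add0r mulr1 => hcd hd0.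
  by move: hcd; rewrite hd0 eqxx; case.
have -> : t = - d / c.
  apply/(mulfI c0); rewrite mulrCA mulfV // mulr1.
  by apply/eqP; rewrite -subr_eq0 opprK; rewrite mulr1 in hE; rewrite hE.
rewrite inE expr_div_n sN; move: hc hd; rewrite /inFq => -> ->; done.
Qed.

Lemma count_fib (beta : L -> L) (P K : {set L}) :
  (forall x y, beta (x - y) = beta x - beta y) ->
  (forall x, beta x \in P) -> (forall x, beta x = 0 -> x \in K) ->
  (#|L| <= #|K| * #|P|)%N.
Proof.
move=> bB bP bK.
pose s b := odflt 0 [pick x | beta x == b].
have sP x : beta (s (beta x)) = beta x.
  rewrite /s; case: pickP => [y /eqP //|/(_ x)]; by rewrite eqxx.
pose g x := (x - s (beta x), beta x).
have ginj : injective g.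
  by move=> x y [] h1 h2; move: h1; rewrite h2 => /addIr.
rewrite -cardsX -[#|L|]cardsT -(card_imset _ ginj).
apply: subset_leq_card; apply/subsetP => z /imsetP [x _ ->].
rewrite inE /= bP andbT; apply: bK; by rewrite bB sP subrr.
Qed.

Lemma count_fix (k : nat) (z : L) : z ^+ (p ^ k) != z ->
  (#|[set t : L | t ^+ (p ^ k) == t]| * #|[set t : L | t ^+ (p ^ k) == t]| <= #|L|)%N.
Proof.
move=> hz; set P := [set t : L | _].
pose g (u : L * L) := u.1 + u.2 * z.
have ginj : {in setX P P &, injective g}.
  move=> [x1 y1] [x2 y2]; rewrite !inE /g /= => /andP[/eqP h1 /eqP h2] /andP[/eqP h3 /eqP h4] E.
  have [ey|ny] := eqVneq y1 y2.
    by move: E; rewrite ey => /addIr ->.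
  have: z = (x1 - x2) / (y2 - y1).
    apply: (mulIf (_ : y2 - y1 != 0)); first by rewrite subr_eq0 eq_sym.
    rewrite -mulrA mulVf ?subr_eq0 1?eq_sym // mulr1.
    apply/eqP; rewrite -subr_eq0; apply/eqP; move: E => /eqP; rewrite eq_sym -subr_eq0 => /eqP <-; ring.
  move=> ez; move: hz; rewrite ez expr_div_n !sB h1 h2 h3 h4 eqxx //.
rewrite -cardsX -(card_in_imset ginj); apply: max_card.
Qed.

Lemma nat_contra (Lc F P Q m : nat) : Lc = (Q ^ m)%N -> (3 < Q)%N -> (2 < m)%N ->
  (Lc <= F * P)%N -> (P * P <= Lc)%N -> (F <= Q)%N -> False.
Proof.
move=> hL hQ hm h1 h2 h3.
have h4 : (Q ^ 3 <= Q ^ m)%N by rewrite leq_pexp2l //; lia.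
have e3 : (Q ^ 3 = Q * Q * Q)%N by rewrite !expnS expn0 muln1 mulnA.
rewrite -hL e3 in h4.
have h5 : (Lc * Lc <= F * F * (P * P))%N.
  have := leq_mul h1 h1; by rewrite mulnACA.
have h6 : (F * F * (P * P) <= Q * Q * Lc)%N by apply: leq_mul; [apply: leq_mul|].
nia.
Qed.

Lemma FqS_small : (#|L| <= #|FqS|)%N -> False.
Proof.
move=> h; have := card_Fq; rewrite hcard in h.
have : (q ^ 1 < q ^ n)%N by rewrite ltn_exp2l; lia.
lia.
Qed.

Lemma comp_sub (W : {set 'rV[L]_2}) : component q a W ->
  0 \in W /\ (forall x y, x \in W -> y \in W -> x - y \in W).
Proof.
have ff0 : ff 0 = 0 by move: (qpolyB 0 0); rewrite !subrr.
rewrite /component /in_D; case=> [[[v _ ->] _]|[h _ ->]].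
  split; first by apply/imsetP; exists 0 => //; rewrite scale0r.
  move=> x y /imsetP[c _ ->] /imsetP[d _ ->]; apply/imsetP; exists (c - d) => //.
  by rewrite scalerBl.
split.
  apply/imsetP; exists 0; last by rewrite scaler0.
  apply/imsetP; exists 0 => //; rewrite ff0; by apply/eqP; rewrite eq_sym vec2_eq0 eqxx.
move=> x y /imsetP[u /imsetP[x1 _ ->] ->] /imsetP[v /imsetP[y1 _ ->] ->].
apply/imsetP; exists (vec2 (x1 - y1) (ff (x1 - y1))); first by apply/imsetP; exists (x1 - y1).
by rewrite -scalerBr qpolyB vec2N vec2D.
Qed.

Lemma alg4 (s1 s2 t1 t2 b00 b01 b10 b11 : L) :
  (s1 * t2 - s2 * t1) * (b00 * b11 - b01 * b10) =
  (s1 * b00 + s2 * b10) * (t1 * b01 + t2 * b11) - (s1 * b01 + s2 * b11) * (t1 * b00 + t2 * b10).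
Proof. ring. Qed.

Lemma part1 (kappa : 'rV[L]_2 -> 'rV[L]_2)
  (hkappa : affine_central_collineation q a kappa)
  (k : nat) (A : 'M[L]_2)
  (hlam : forall x y : L,
      kappa (vec2 x y) = vec2 (x ^+ (p ^ k)) (y ^+ (p ^ k)) *m A + kappa 0) :
  forall x : L, x ^+ (p ^ k) = x.
Proof.
pose vs (v : 'rV[L]_2) := vec2 (v 0 0 ^+ (p ^ k)) (v 0 1 ^+ (p ^ k)).
have hl v : kappa v = vs v *m A + kappa 0 by rewrite -{1}(@vec2E _ v) hlam.
have vsD v w : vs (v + w) = vs v + vs w by rewrite /vs !mxE !sD vec2D.
case: hkappa => _ _ [u [W [hW hfix _]]].
have [W0 Wsub] := comp_sub _ hW.
have fixW w : w \in W -> vs w *m A = w.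
  move=> hw.
  have h1 : kappa (u + w) = u + w by apply: hfix; apply/imsetP; exists w.
  have h2 : kappa u = u by apply: hfix; apply/imsetP; exists 0 => //; rewrite addr0.
  rewrite hl vsD mulmxDl addrAC in h1; rewrite hl in h2.
  by rewrite h2 in h1; apply: (addrI u).
move: hW; rewrite /component /in_D; case=> [[[v v0 WE] _]|[h h0 WE]].
  have fv : vs v *m A = v.
    by apply: fixW; rewrite WE; apply/imsetP; exists 1 => //; rewrite scale1r.
  move=> x.
  have : vs (x *: v) *m A = x *: v by apply: fixW; rewrite WE; apply/imsetP; exists x.
  have -> : vs (x *: v) = x ^+ (p ^ k) *: vs v.
    by rewrite /vs !mxE vec2Z !exprMn.
  rewrite -scalemxAl fv => /eqP; rewrite -subr_eq0 -scalerBl scaler_eq0 (negbTE v0) orbF.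
  by rewrite subr_eq0 => /eqP.
pose w x := h *: vec2 x (ff x).
have wW x : w x \in W by rewrite WE; apply/imsetP; exists (vec2 x (ff x)) => //; apply/imsetP; exists x.
have E12 x : (h * x) ^+ (p ^ k) * A 0 0 + (h * ff x) ^+ (p ^ k) * A 1 0 = h * x /\
             (h * x) ^+ (p ^ k) * A 0 1 + (h * ff x) ^+ (p ^ k) * A 1 1 = h * ff x.
  have := fixW _ (wW x); rewrite /vs /w vec2Z !vec2_00 !vec2_01 mul_vec2.
  by move/vec2_inj.
pose cA := A 0 0 * A 1 1 - A 0 1 * A 1 0.
pose D x x' := (h * x) * (h * ff x') - (h * ff x) * (h * x').
have hD x x' : D x x' = (D x x') ^+ (p ^ k) * cA.
  rewrite /D sB (exprMn _ (h * x)) (exprMn _ (h * ff x)) /cA alg4.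
  by case: (E12 x) => -> ->; case: (E12 x') => -> ->.
have Dz x : D 1 x = 0 -> x \in FqS.
  move=> hx; apply: kerFq.
  have : h * h * (ff x - x * ff 1) = 0 by rewrite -hx /D; ring.
  move/eqP; rewrite !mulf_eq0 (negbTE h0) /= subr_eq0 => /eqP ->; by rewrite mulrC.
case: (boolP [exists z, D 1 z != 0]) => [/existsP [z hz] | /existsPn hz]; last first.
  exfalso; apply: FqS_small; rewrite -cardsT; apply: subset_leq_card.
  by apply/subsetP => x _; apply: Dz; move: (hz x); rewrite negbK => /eqP.
have hDz := hD 1 z.
have cA0 : cA != 0 by apply/eqP => c0; move: hz; rewrite hDz c0 mulr0 eqxx.
have sz0 : D 1 z ^+ (p ^ k) != 0 by apply/eqP => c0; move: hz; rewrite hDz c0 mul0r eqxx.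
case: (boolP [forall x : L, x ^+ (p ^ k) == x]) => [H|/forallPn [z0 hz0]].
  by move=> x; apply/eqP; move/forallP: H; apply.
exfalso.
pose be x := D 1 x / D 1 z.
have bB x y : be (x - y) = be x - be y by rewrite /be /D qpolyB; ring.
have bP x : be x \in [set t : L | t ^+ (p ^ k) == t].
  rewrite inE; apply/eqP; rewrite /be expr_div_n.
  have -> : D 1 x / D 1 z = (D 1 x ^+ (p ^ k) * cA) / (D 1 z ^+ (p ^ k) * cA) by rewrite -!hD.
  by field; rewrite sz0 cA0.
have bK x : be x = 0 -> x \in FqS.
  by move=> /eqP; rewrite /be mulf_eq0 invr_eq0 (negbTE hz) orbF => /eqP; apply: Dz.
have c1 := count_fib be _ FqS bB bP bK.
have c2 := count_fix k z0 hz0.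
exact: (nat_contra _ _ _ _ _ hcard hq hn c1 c2 card_Fq).
Qed.

Lemma part2 (kappa : 'rV[L]_2 -> 'rV[L]_2)
  (hkappa : affine_central_collineation q a kappa) (A : 'M[L]_2) (hA : A \in unitmx)
  (hl : forall v, kappa v = v *m A + kappa 0) : in_Hf q a A.
Proof.
case: hkappa => [[_ hline] _ _].
have Uf1 : Uf q a = [set 1 *: u | u in Uf q a].
  by apply/setP => y; apply/idP/imsetP => [hy|[u hu ->]]; [exists y; rewrite ?scale1r|rewrite scale1r].
have Uf0 : Uf q a = translate 0 (Uf q a).
  by apply/setP => y; apply/idP/imsetP => [hy|[u hu ->]]; [exists y; rewrite ?add0r|rewrite add0r].
have hUf : is_line q a (Uf q a).
  by exists 0, (Uf q a); split => //; right; exists 1 => //; exact: oner_neq0.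
have [u' [W' [hW' himg]]] := (hline (Uf q a)).2 hUf.
have [W0 Wsub] := comp_sub _ hW'.
have Wadd x y : x \in W' -> y \in W' -> x + y \in W'.
  by move=> hx hy; rewrite -[y]opprK -[- y]sub0r; apply: (Wsub) => //; apply: (Wsub).
have ff0 : ff 0 = 0 by move: (qpolyB 0 0); rewrite !subrr.
have U0 : 0 \in Uf q a.
  by apply/imsetP; exists 0 => //; rewrite ff0; apply/eqP; rewrite eq_sym vec2_eq0 eqxx.
have [w0 hw0 k0] : exists2 w0, w0 \in W' & kappa 0 = u' + w0.
  have : kappa 0 \in kappa @: Uf q a by apply: imset_f.
  by rewrite himg => /imsetP[w0 hw0 ->]; exists w0.
have UfA : [set x *m A | x in Uf q a] = W'.
  apply/setP => y; apply/imsetP/idP => [[x hx ->]|hy].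
    have : kappa x \in kappa @: Uf q a by apply: imset_f.
    rewrite himg => /imsetP[w1 hw1]; rewrite hl k0 => E.
    have -> : x *m A = (x *m A + (u' + w0)) - (u' + w0) by rewrite addrK.
    by rewrite E opprD addrACA subrr add0r; apply: (Wsub).
  have : u' + (w0 + y) \in kappa @: Uf q a by rewrite himg; apply/imsetP; exists (w0 + y) => //; apply: (Wadd).
  case/imsetP => x hx; rewrite hl k0 => E; exists x => //.
  have -> : y = (u' + (w0 + y)) - (u' + w0) by rewrite addrA [u' + w0 + y]addrC addrK.
  by rewrite E addrK.
have mulA_inj : injective (fun x : 'rV[L]_2 => x *m A).
  by move=> x y /= /(congr1 (mulmx^~ (invmx A))); rewrite !mulmxK.
move: hW'; rewrite /component /in_D; case=> [[[v v0 WE] _]|[h h0 WE]].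
  exfalso; apply: FqS_small; rewrite -cardsT; apply: subset_leq_card.
  apply/subsetP => t _.
  have v1U : vec2 1 (ff 1) \in Uf q a by apply/imsetP; exists 1.
  have : vec2 1 (ff 1) *m A \in W' by rewrite -UfA; apply: imset_f.
  rewrite WE => /imsetP[c _ hc].
  have : (t *: vec2 1 (ff 1)) *m A \in W'.
    by rewrite -scalemxAl hc scalerA WE; apply: imset_f.
  rewrite -UfA => /imsetP[y /imsetP[x _ ->]] /mulA_inj.
  rewrite vec2Z => /vec2_inj [ht hf]; apply: kerFq.
  by rewrite mulr1 in ht; rewrite hf ht.
exists h, (h^-1 *: A); split => //; last by rewrite scalerA mulfV // scale1r.
split; first by rewrite unitmxZ // unitfE invr_eq0.
apply/setP => y; apply/imsetP/idP => [[x hx ->]|hy].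
  have : x *m A \in W' by rewrite -UfA; apply: imset_f.
  rewrite WE => /imsetP[u2 hu2 hE].
  by rewrite -scalemxAr hE scalerA mulVf // scale1r.
have : h *: y \in W' by rewrite WE; apply: imset_f.
rewrite -UfA => /imsetP[x hx hE]; exists x => //.
by rewrite -scalemxAr -hE scalerA mulVf // scale1r.
Qed.
End S.

Theorem proposition5p2 (L : finFieldType) (p e n : nat) (a : 'I_n -> L)
  (hp : prime p) (he : (0 < e)%N) (hcard : #|L| = ((p ^ e) ^ n)%N)
  (hq : (3 < p ^ e)%N) (hn : (2 < n)%N)
  (hscat : scattered (p ^ e) a)
  (kappa : 'rV[L]_2 -> 'rV[L]_2)
  (hkappa : affine_central_collineation (p ^ e) a kappa)
  (k : nat) (A : 'M[L]_2)
  (hk : (k < n * e)%N) (hA : A \in unitmx)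
  (hlam : forall x y : L,
      kappa (vec2 x y) = vec2 (x ^+ (p ^ k)) (y ^+ (p ^ k)) *m A + kappa 0) :
  (forall x : L, x ^+ (p ^ k) = x) /\ in_Hf (p ^ e) a A.
Proof.
have h1 := part1 _ _ _ _ _ hp he hcard hq hn hscat _ hkappa _ _ hlam.
split => //; apply: (part2 _ _ _ _ _ hp he hcard hq hn hscat _ hkappa _ hA) => v.
rewrite -{1}(@vec2E _ v) hlam. rewrite !h1. by rewrite vec2E.
Qed.
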